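(* Let $R$ be a commutative ring in which $2$ is invertible, let $Q=R$ with quadratic form $q(z)=z^2$, and let $m\ge1$. Identify automorphisms of $Q\perp\mathbb{H}(R)^m$ with matrices in $\mathrm{GL}_{2m+1}(R)$ via the ordered basis $(1,x_1,f_1,x_2,f_2,\dots,x_m,f_m)$. Then $\mathrm{EO}_R(Q,\mathbb{H}(R)^m)=\mathrm{EO}_{2m+1}(R)$.
   Context: For a quadratic form $q$ the bilinear form is $\langle x,y\rangle=q(x+y)-q(x)-q(y)$; thus on $Q=R$, $\langle z,z'\rangle=2zz'$. $\mathbb{H}(R)^m=\mathbb{H}(R^m)=R^m\oplus (R^m)^*$ with basis $x_1,\dots,x_m$ and dual basis $f_1,\dots,f_m$, and $q(y,g)=g(y)$; orthogonal sums carry the sum of forms. With respect to the basis above, the bilinear form on $Q\perp\mathbb{H}(R)^m$ has matrix $(2)\perp\widetilde{\psi}_m$, where $\widetilde{\psi}_s=\sum_{i=1}^s(e_{2i-1,2i}+e_{2i,2i-1})$ and $e_{i,j}$ are matrix units. DSER transformations on $Q\perp\mathbb{H}(P)$: for $\alpha:Q\to P$ let $\alpha^*:P^*\to Q$ satisfy $\langle\alpha^*(g),z\rangle=g(\alpha(z))$ and $E_\alpha(z,y,g)=(z-\alpha^*(g),y+\alpha(z)-\tfrac12\alpha\alpha^*(g),g)$; for $\beta:Q\to P^*$ let $\beta^*:P\to Q$ satisfy $\langle\beta^*(y),z\rangle=\beta(z)(y)$ and $E^*_\beta(z,y,g)=(z-\beta^*(y),y,g+\beta(z)-\tfrac12\beta\beta^*(y))$.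 $\mathrm{EO}_R(Q,\mathbb{H}(P))$ is generated by all $E_\alpha,E^*_\beta$. Odd elementary orthogonal group: for $N=2s+1$ (indices $1,\dots,2s+1$) and $1\le i\le s$, $\lambda\in R$, let $F^1_i(\lambda)=I_N+\lambda(e_{1,2i+1}-2e_{2i,1}-\lambda e_{2i,2i+1})$ and $F^2_i(\lambda)=I_N+\lambda(e_{1,2i}-2e_{2i+1,1}-\lambda e_{2i+1,2i})$ (orthogonal for $(2)\perp\widetilde{\psi}_s$). $\mathrm{EO}_{2s+1}(R)$ is the group generated by all $F^1_i(\lambda),F^2_i(\lambda)$, $\lambda\in R$. *)

(* Defs.v *)
From HB Require Import structures.
From mathcomp Require Import all_boot all_order all_algebra.
Set Implicit Arguments. Unset Strict Implicit. Unset Printing Implicit Defensive.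
Import Order.TTheory GRing.Theory Num.Theory.
Local Open Scope ring_scope.

Section Defs.
Variable (R : comUnitRingType) (m : nat).

(* Elements of Q _|_ H(R^m) = R (+) R^m (+) (R^m)^* , written as triples
   (z, y, g): y is given by its coordinates on x_1..x_m, g by its
   coordinates on the dual basis f_1..f_m. *)
Definition elt := (R * 'rV[R]_m * 'rV[R]_m)%type.

Definition dpair (g y : 'rV[R]_m) : R := \sum_(i < m) g 0 i * y 0 i.

(* bilinear form on Q = R (q(z) = z^2): <z,z'> = 2 z z' *)
Definition bQ (z z' : R) : R := 2%:R * z * z'.

Definition half : R := (2%:R)^-1.

Definition E_alpha (alpha : R -> 'rV[R]_m) (alphas : 'rV[R]_m -> R) (v : elt) : elt :=
  let: (z, y, g) := v in
  (z - alphas g, y + alpha z - half *: alpha (alphas g), g).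

Definition E_beta (beta : R -> 'rV[R]_m) (betas : 'rV[R]_m -> R) (v : elt) : elt :=
  let: (z, y, g) := v in
  (z - betas y, y, g + beta z - half *: beta (betas y)).

Definition linR (f : R -> 'rV[R]_m) : Prop :=
  (forall z z', f (z + z') = f z + f z') /\ (forall c z, f (c * z) = c *: f z).

(* ordered basis (1, x_1, f_1, ..., x_m, f_m), indexed by ordinals 0..2m:
   index 0 <-> 1 in Q, index 2i+1 <-> x_(i+1), index 2i+2 <-> f_(i+1) *)
Definition coord (k : 'I_((2 * m).+1)) (v : elt) : R :=
  let: (z, y, g) := v in
  if (k == 0 :> nat) then z
  else \sum_(i < m) (if (k == (2 * i).+1 :> nat) then y 0 i
                     else if (k == (2 * i).+2 :> nat) then g 0 i else 0).

Definition basis_elt (l : 'I_((2 * m).+1)) : elt :=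
  ((l == 0 :> nat)%:R,
   \row_(i < m) (l == (2 * i).+1 :> nat)%:R,
   \row_(i < m) (l == (2 * i).+2 :> nat)%:R).

(* matrix of an endomorphism w.r.t. the ordered basis (columns = images) *)
Definition mx_of (f : elt -> elt) : 'M[R]_((2 * m).+1) :=
  \matrix_(k, l) coord k (f (basis_elt l)).

Inductive gen_grp (n : nat) (S : 'M[R]_n -> Prop) : 'M[R]_n -> Prop :=
| gen_one : gen_grp S 1%:M
| gen_el A : S A -> gen_grp S A
| gen_mul A B : gen_grp S A -> gen_grp S B -> gen_grp S (A *m B)
| gen_inv A : gen_grp S A -> gen_grp S (invmx A).

Definition EO_R_gens (M : 'M[R]_((2 * m).+1)) : Prop :=
  (exists (alpha : R -> 'rV[R]_m) (alphas : 'rV[R]_m -> R),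
      linR alpha /\ (forall g z, bQ (alphas g) z = dpair g (alpha z)) /\
      M = mx_of (E_alpha alpha alphas))
  \/
  (exists (beta : R -> 'rV[R]_m) (betas : 'rV[R]_m -> R),
      linR beta /\ (forall y z, bQ (betas y) z = dpair (beta z) y) /\
      M = mx_of (E_beta beta betas)).

Definition EO_R : 'M[R]_((2 * m).+1) -> Prop := gen_grp EO_R_gens.

Definition munit (a b : nat) : 'M[R]_((2 * m).+1) :=
  \matrix_(k, l) ((k == a :> nat) && (l == b :> nat))%:R.

(* paper's F^1_i(lambda), F^2_i(lambda) for i = j+1, 0 <= j < m; paper index p
   is 0-based index p-1, so paper indices 1, 2i, 2i+1 are 0, 2j+1, 2j+2 *)
Definition F1 (j : nat) (lam : R) : 'M[R]_((2 * m).+1) :=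
  1%:M + lam *: (munit 0 (2 * j).+2 - 2%:R *: munit (2 * j).+1 0
                 - lam *: munit (2 * j).+1 (2 * j).+2).

Definition F2 (j : nat) (lam : R) : 'M[R]_((2 * m).+1) :=
  1%:M + lam *: (munit 0 (2 * j).+1 - 2%:R *: munit (2 * j).+2 0
                 - lam *: munit (2 * j).+2 (2 * j).+1).

Definition EO_odd_gens (M : 'M[R]_((2 * m).+1)) : Prop :=
  exists j lam, (j < m)%N /\ (M = F1 j lam \/ M = F2 j lam).

Definition EO_odd : 'M[R]_((2 * m).+1) -> Prop := gen_grp EO_odd_gens.

End Defs.

(* Main.v *)
From HB Require Import structures.
Require Import Defs.
From mathcomp Require Import all_boot all_order all_algebra zify ring.
Set Implicit Arguments. Unset Strict Implicit. Unset Printing Implicit Defensive.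
Import Order.TTheory GRing.Theory Num.Theory.
Local Open Scope ring_scope.

Section Proof.
Variable (R : comUnitRingType) (m : nat).
Hypothesis h2 : (2%:R : R) \is a GRing.unit.
Local Notation N := ((2 * m).+1).
Local Notation h := (Defs.half R).

Lemma hK : h * 2%:R = 1 :> R.
Proof. exact: mulVr h2. Qed.

Lemma modh (P Q D : R) : P - Q = (h * 2%:R - 1) * D -> P = Q.
Proof. by rewrite hK subrr mul0r => /eqP; rewrite subr_eq0 => /eqP. Qed.

Lemma e11 (i j : nat) : ((2*i).+1 == (2*j).+1) = (i == j).
Proof. apply/eqP/eqP; lia. Qed.
Lemma e22 (i j : nat) : ((2*i).+2 == (2*j).+2) = (i == j).
Proof. apply/eqP/eqP; lia. Qed.
Lemma e12 (i j : nat) : ((2*i).+1 == (2*j).+2) = false.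
Proof. apply/negbTE/eqP; lia. Qed.
Lemma e21 (i j : nat) : ((2*i).+2 == (2*j).+1) = false.
Proof. apply/negbTE/eqP; lia. Qed.

Lemma idx_nat (n : nat) : n = 0%N \/ exists i, n = (2*i).+1 \/ n = (2*i).+2.
Proof.
elim: n => [|n [->|[i [->|->]]]]; [by left| right; exists 0%N; by left
 |right; exists i; by right|right; exists i.+1; left; lia].
Qed.

Lemma idx (k : 'I_N) : (k : nat) = 0%N \/
  exists i : 'I_m, (k : nat) = (2*i).+1 \/ (k : nat) = (2*i).+2.
Proof.
case: (idx_nat k) => [->|[i hi]]; first by left.
right; have lti : (i < m)%N by case: hi (ltn_ord k) => ->; lia.
by exists (Ordinal lti).
Qed.

Lemma sum_delta (T : finType) (t : T) (F : T -> R) :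
  \sum_x (x == t)%:R * F x = F t.
Proof.
rewrite (bigD1 t) //= eqxx mul1r big1 ?addr0 // => x /negbTE ->.
by rewrite mul0r.
Qed.

Lemma sum_delta' (T : finType) (t : T) (F : T -> R) :
  \sum_x (t == x)%:R * F x = F t.
Proof. by rewrite -(sum_delta t); apply: eq_bigr => x _; rewrite eq_sym. Qed.

Definition cY (k : nat) (y : 'rV[R]_m) : R := \sum_(i < m) (k == (2*i).+1)%:R * y 0 i.
Definition cG (k : nat) (y : 'rV[R]_m) : R := \sum_(i < m) (k == (2*i).+2)%:R * y 0 i.

Lemma cY0 y : cY 0 y = 0.
Proof. by rewrite /cY /cG big1 // => i _; rewrite mul0r. Qed.
Lemma cG0 y : cG 0 y = 0.
Proof. by rewrite /cY /cG big1 // => i _; rewrite mul0r. Qed.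
Lemma cY1 (i : 'I_m) y : cY (2*i).+1 y = y 0 i.
Proof. by rewrite /cY; under eq_bigr do rewrite e11; apply: sum_delta'. Qed.
Lemma cG2 (i : 'I_m) y : cG (2*i).+2 y = y 0 i.
Proof. by rewrite /cG; under eq_bigr do rewrite e22; apply: sum_delta'. Qed.
Lemma cY2 (i : 'I_m) y : cY (2*i).+2 y = 0.
Proof. by rewrite /cY /cG big1 // => j _; rewrite e21 mul0r. Qed.
Lemma cG1 (i : 'I_m) y : cG (2*i).+1 y = 0.
Proof. by rewrite /cY /cG big1 // => j _; rewrite e12 mul0r. Qed.

Lemma cY_lin k (a b : R) y y' : cY k (a *: y + b *: y') = a * cY k y + b * cY k y'.
Proof.
rewrite /cY !mulr_sumr -big_split; apply: eq_bigr => i _; rewrite !mxE /=; ring.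
Qed.
Lemma cG_lin k (a b : R) y y' : cG k (a *: y + b *: y') = a * cG k y + b * cG k y'.
Proof.
rewrite /cG !mulr_sumr -big_split; apply: eq_bigr => i _; rewrite !mxE /=; ring.
Qed.

Lemma coordE (k : 'I_N) z y g :
  Defs.coord k (z, y, g) = ((k : nat) == 0%N)%:R * z + cY k y + cG k g.
Proof.
rewrite /Defs.coord; case: ifP => [/eqP k0|k0].
  by rewrite k0 cY0 cG0 mul1r !addr0.
rewrite mul0r add0r /cY /cG -big_split; apply: eq_bigr => i _ /=.
case: eqP => [->|_]; first by rewrite e12 mul1r mul0r addr0.
by case: eqP => _; rewrite ?mul1r ?mul0r ?add0r.
Qed.

Lemma coord_basis (k l : 'I_N) : Defs.coord k (basis_elt R l) = ((k : nat) == l)%:R.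
Proof.
rewrite /basis_elt coordE.
case: (idx k) => [->|[i [->|->]]].
- by rewrite cY0 cG0 !addr0  ?mulr1 eqxx mul1r eq_sym.
- by rewrite cY1 cG1 mxE mul0r add0r addr0 eq_sym.
- by rewrite cY2 cG2 mxE mul0r add0r add0r eq_sym.
Qed.

Definition dpairR := dpair (R:=R) (m:=m).

Lemma coord_ord1 (i : 'I_m) (v : elt R m) :
  Defs.coord (inord (2*i).+1 : 'I_N) v = v.1.2 0 i.
Proof.
case: v => [[z y] g]; rewrite coordE inordK; last by have := ltn_ord i; lia.
by rewrite cY1 cG1 mul0r add0r addr0.
Qed.
Lemma coord_ord2 (i : 'I_m) (v : elt R m) :
  Defs.coord (inord (2*i).+2 : 'I_N) v = v.2 0 i.
Proof.
case: v => [[z y] g]; rewrite coordE inordK; last by have := ltn_ord i; lia.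
by rewrite cY2 cG2 mul0r !add0r.
Qed.

Definition dX (l : nat) : 'rV[R]_m := \row_(i < m) (l == (2 * i).+1 :> nat)%:R.
Definition dF (l : nat) : 'rV[R]_m := \row_(i < m) (l == (2 * i).+2 :> nat)%:R.

Lemma S1 (a : 'rV[R]_m) (v : elt R m) :
  \sum_(l < N) dpair (dF l) a * Defs.coord l v = dpair v.2 a.
Proof.
rewrite /dpair; under eq_bigr do rewrite mulr_suml.
rewrite exchange_big; apply: eq_bigr => i _ /=.
have hi : ((2*i).+2 < N)%N by have := ltn_ord i; lia.
rewrite -(coord_ord2 i v) -(sum_delta (inord (2*i).+2 : 'I_N) (fun l => Defs.coord l v)).
rewrite ?mulr_suml ?mulr_sumr; apply: eq_bigr => l _; rewrite mxE.
have -> : (l == inord (2*i).+2 :> 'I_N) = ((l : nat) == (2*i).+2).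
  by rewrite -(inj_eq val_inj) /= inordK.
ring.
Qed.

Lemma S2 (b : 'rV[R]_m) (v : elt R m) :
  \sum_(l < N) dpair b (dX l) * Defs.coord l v = dpair b v.1.2.
Proof.
rewrite /dpair; under eq_bigr do rewrite mulr_suml.
rewrite exchange_big; apply: eq_bigr => i _ /=.
have hi : ((2*i).+1 < N)%N by have := ltn_ord i; lia.
rewrite -(coord_ord1 i v) -(sum_delta (inord (2*i).+1 : 'I_N) (fun l => Defs.coord l v)).
rewrite ?mulr_suml ?mulr_sumr; apply: eq_bigr => l _; rewrite mxE.
have -> : (l == inord (2*i).+1 :> 'I_N) = ((l : nat) == (2*i).+1).
  by rewrite -(inj_eq val_inj) /= inordK.
ring.
Qed.

Lemma S0 (v : elt R m) : \sum_(l < N) ((l : nat) == 0%N)%:R * Defs.coord l v = v.1.1.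
Proof.
case: v => [[z y] g].
transitivity (Defs.coord (ord0 : 'I_N) (z, y, g)); last by rewrite coordE cY0 cG0 !addr0 mul1r.
by rewrite -(sum_delta (ord0 : 'I_N) (fun l => Defs.coord l (z, y, g))).
Qed.


Lemma zN : (0%R : nat) = 0%N. Proof. by []. Qed.

Lemma cYD k y y' : cY k (y + y') = cY k y + cY k y'.
Proof. by rewrite /cY -big_split; apply: eq_bigr => i _; rewrite !mxE /= mulrDr. Qed.
Lemma cYN k y : cY k (- y) = - cY k y.
Proof. by rewrite /cY -sumrN; apply: eq_bigr => i _; rewrite !mxE mulrN. Qed.
Lemma cYZ k c y : cY k (c *: y) = c * cY k y.
Proof. by rewrite /cY mulr_sumr; apply: eq_bigr => i _; rewrite !mxE mulrCA. Qed.
Lemma cGD k y y' : cG k (y + y') = cG k y + cG k y'.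
Proof. by rewrite /cG -big_split; apply: eq_bigr => i _; rewrite !mxE /= mulrDr. Qed.
Lemma cGN k y : cG k (- y) = - cG k y.
Proof. by rewrite /cG -sumrN; apply: eq_bigr => i _; rewrite !mxE mulrN. Qed.
Lemma cGZ k c y : cG k (c *: y) = c * cG k y.
Proof. by rewrite /cG mulr_sumr; apply: eq_bigr => i _; rewrite !mxE mulrCA. Qed.

Lemma dpairDr (g a b : 'rV[R]_m) : dpair g (a + b) = dpair g a + dpair g b.
Proof. by rewrite /dpair -big_split; apply: eq_bigr => i _; rewrite !mxE /= mulrDr. Qed.
Lemma dpairNr (g a : 'rV[R]_m) : dpair g (- a) = - dpair g a.
Proof. by rewrite /dpair -sumrN; apply: eq_bigr => i _; rewrite !mxE mulrN. Qed.
Lemma dpairZr (g a : 'rV[R]_m) c : dpair g (c *: a) = c * dpair g a.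
Proof. by rewrite /dpair mulr_sumr; apply: eq_bigr => i _; rewrite !mxE mulrCA. Qed.
Lemma dpairDl (g a b : 'rV[R]_m) : dpair (a + b) g = dpair a g + dpair b g.
Proof. by rewrite /dpair -big_split; apply: eq_bigr => i _; rewrite !mxE /= mulrDl. Qed.
Lemma dpairNl (g a : 'rV[R]_m) : dpair (- a) g = - dpair a g.
Proof. by rewrite /dpair -sumrN; apply: eq_bigr => i _; rewrite !mxE mulNr. Qed.
Lemma dpairZl (g a : 'rV[R]_m) c : dpair (c *: a) g = c * dpair a g.
Proof. by rewrite /dpair mulr_sumr; apply: eq_bigr => i _; rewrite !mxE mulrA. Qed.
Lemma dpair0r (g : 'rV[R]_m) : dpair g 0 = 0.
Proof. by rewrite /dpair big1 // => i _; rewrite mxE mulr0. Qed.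
Lemma dpair0l (g : 'rV[R]_m) : dpair 0 g = 0.
Proof. by rewrite /dpair big1 // => i _; rewrite mxE mul0r. Qed.

Definition EA (a : 'rV[R]_m) : elt R m -> elt R m :=
  E_alpha (fun z => z *: a) (fun g => h * dpair g a).
Definition EB (b : 'rV[R]_m) : elt R m -> elt R m :=
  E_beta (fun z => z *: b) (fun y => h * dpair b y).

Lemma coordEA (k : 'I_N) a (v : elt R m) :
  Defs.coord k (EA a v) = Defs.coord k v
    - (((k : nat) == 0%N)%:R * h + h * h * cY k a) * dpair v.2 a + v.1.1 * cY k a.
Proof.
case: v => [[z y] g].
have -> : EA a (z, y, g) = (z - h * dpair g a, y + z *: a - h *: ((h * dpair g a) *: a), g) by [].
rewrite !coordE /=.
rewrite !cYD cYN !cYZ; ring.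
Qed.

Lemma coordEB (k : 'I_N) b (v : elt R m) :
  Defs.coord k (EB b v) = Defs.coord k v
    - (((k : nat) == 0%N)%:R * h + h * h * cG k b) * dpair b v.1.2 + v.1.1 * cG k b.
Proof.
case: v => [[z y] g].
have -> : EB b (z, y, g) = (z - h * dpair b y, y, g + z *: b - h *: ((h * dpair b y) *: b)) by [].
rewrite !coordE /=.
rewrite !cGD cGN !cGZ; ring.
Qed.

Definition rep (f : elt R m -> elt R m) := forall (k : 'I_N) (v : elt R m),
  Defs.coord k (f v) = \sum_(l < N) mx_of f k l * Defs.coord l v.

Lemma rep_gen (f : elt R m -> elt R m) (K Y : 'I_N -> R) (P : elt R m -> R) :
  (forall k v, Defs.coord k (f v) = Defs.coord k v - K k * P v + v.1.1 * Y k) ->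
  (forall v, \sum_(l < N) P (basis_elt R l) * Defs.coord l v = P v) -> rep f.
Proof.
move=> hf hP k v.
under eq_bigr do rewrite mxE hf coord_basis.
rewrite hf; transitivity (\sum_(l < N) (((k : nat) == l)%:R * Defs.coord l v)
   - K k * \sum_(l < N) (P (basis_elt R l) * Defs.coord l v)
   + Y k * \sum_(l < N) (((l : nat) == 0%N)%:R * Defs.coord l v)).
  rewrite hP S0 /=.
  have -> : \sum_(l < N) (((k : nat) == l)%:R * Defs.coord l v) = Defs.coord k v.
    exact: (sum_delta' k (fun l => Defs.coord l v)).
  ring.
rewrite !mulr_sumr -sumrB -big_split; apply: eq_bigr => l _ /=; ring.
Qed.

Lemma repEA a : rep (EA a).
Proof.
apply: (rep_gen (P := fun v => dpair v.2 a)) => [k v|v].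
  exact: coordEA.
exact: S1.
Qed.

Lemma repEB b : rep (EB b).
Proof.
apply: (rep_gen (P := fun v => dpair b v.1.2)) => [k v|v].
  exact: coordEB.
exact: S2.
Qed.

Lemma mx_comp f g : rep f -> mx_of (fun x => f (g x)) = mx_of f *m mx_of g.
Proof.
move=> hf; apply/matrixP => k l; rewrite !mxE hf.
by apply: eq_bigr => p _; rewrite !mxE.
Qed.

Lemma mx_of_ext (f g : elt R m -> elt R m) : (forall x, f x = g x) -> mx_of f = mx_of g.
Proof. by move=> e; apply/matrixP => k l; rewrite !mxE e. Qed.

Lemma mx_of_id : mx_of (fun x : elt R m => x) = 1%:M.
Proof. by apply/matrixP => k l; rewrite !mxE coord_basis. Qed.

Lemma EA0 x : EA 0 x = x.
Proof.
case: x => [[z y] g]; rewrite /EA /E_alpha /= dpair0r.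
by rewrite !(mulr0, subr0, scaler0, scale0r, addr0).
Qed.
Lemma EB0 x : EB 0 x = x.
Proof.
case: x => [[z y] g]; rewrite /EB /E_beta /= dpair0l.
by rewrite !(mulr0, subr0, scaler0, scale0r, addr0).
Qed.


Lemma EA_add u v x :
  EA (u + v) x = EA (h *: v) (EA u (EA (- (h *: v)) (EA v x))).
Proof.
case: x => [[z y] g]; rewrite /EA /E_alpha /=.
rewrite !dpairDr !dpairNr !dpairZr.
congr (_, _, _); first ring.
apply/rowP => i; rewrite !mxE.
apply: (modh (D := v 0 i * h ^+ 3 * dpair g v - u 0 i * dpair g v * h)); ring.
Qed.

Lemma EB_add u v x :
  EB (u + v) x = EB (h *: v) (EB u (EB (- (h *: v)) (EB v x))).
Proof.
case: x => [[z y] g]; rewrite /EB /E_beta /=.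
rewrite !dpairDl !dpairNl !dpairZl.
congr (_, _, _); first ring.
apply/rowP => i; rewrite !mxE.
apply: (modh (D := v 0 i * h ^+ 3 * dpair v y - u 0 i * dpair v y * h)); ring.
Qed.


Lemma coord_basis' (k l : 'I_N) : Defs.coord k (basis_elt R l) = (k == l)%:R.
Proof. exact: coord_basis. Qed.

Definition delta (j : 'I_m) : 'rV[R]_m := \row_i ((i == j)%:R : R).

Lemma cY_delta (k : nat) j : cY k (delta j) = (k == (2*j).+1)%:R.
Proof.
rewrite /cY; under eq_bigr do rewrite mxE mulrC.
exact: (sum_delta j (fun i : 'I_m => (k == (2*i).+1)%:R)).
Qed.
Lemma cG_delta (k : nat) j : cG k (delta j) = (k == (2*j).+2)%:R.
Proof.
rewrite /cG; under eq_bigr do rewrite mxE mulrC.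
exact: (sum_delta j (fun i : 'I_m => (k == (2*i).+2)%:R)).
Qed.
Lemma dpF_delta (l : 'I_N) j :
  dpair (basis_elt R l).2 (delta j) = ((l : nat) == (2*j).+2)%:R.
Proof.
rewrite /dpair; under eq_bigr do rewrite !mxE mulrC.
exact: (sum_delta j (fun i : 'I_m => ((l : nat) == (2*i).+2)%:R)).
Qed.
Lemma dpX_delta (l : 'I_N) j :
  dpair (delta j) (basis_elt R l).1.2 = ((l : nat) == (2*j).+1)%:R.
Proof.
rewrite /dpair; under eq_bigr do rewrite !mxE.
exact: (sum_delta j (fun i : 'I_m => ((l : nat) == (2*i).+1)%:R)).
Qed.

Lemma mxEA_F1 (j : 'I_m) c lam : c = - (2%:R * lam) ->
  mx_of (EA (c *: delta j)) = F1 m j lam.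
Proof.
move=> ->; apply/matrixP => k l.
rewrite mxE coordEA coord_basis' cYZ cY_delta dpairZr dpF_delta /F1 /munit !mxE /=.
rewrite -!mulnb !natrM ?zN.
apply: (modh (D := lam * (((k : nat) == 0%N)%:R * ((l : nat) == (2 * j).+2)%:R)
   - lam * lam * (h * 2%:R + 1) * (((k : nat) == (2 * j).+1)%:R * ((l : nat) == (2 * j).+2)%:R))).
ring.
Qed.

Lemma mxEB_F2 (j : 'I_m) c lam : c = - (2%:R * lam) ->
  mx_of (EB (c *: delta j)) = F2 m j lam.
Proof.
move=> ->; apply/matrixP => k l.
rewrite mxE coordEB coord_basis' cGZ cG_delta dpairZl dpX_delta /F2 /munit !mxE /=.
rewrite -!mulnb !natrM ?zN.
apply: (modh (D := lam * (((k : nat) == 0%N)%:R * ((l : nat) == (2 * j).+1)%:R)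
   - lam * lam * (h * 2%:R + 1) * (((k : nat) == (2 * j).+2)%:R * ((l : nat) == (2 * j).+1)%:R))).
ring.
Qed.


Lemma gen_ind (E : 'rV[R]_m -> elt R m -> elt R m) (S : 'M[R]_N -> Prop) :
  (forall a, rep (E a)) ->
  (forall u v x, E (u + v) x = E (h *: v) (E u (E (- (h *: v)) (E v x)))) ->
  (forall x, E 0 x = x) ->
  (forall (j : 'I_m) c, gen_grp S (mx_of (E (c *: delta j)))) ->
  forall a, gen_grp S (mx_of (E a)).
Proof.
move=> hrep hadd h0 hgen.
suff H : forall n (a : 'rV[R]_m), (forall i : 'I_m, (n <= i)%N -> a 0 i = 0) -> gen_grp S (mx_of (E a)).
  by move=> a; apply: (H m) => i; rewrite leqNgt ltn_ord.
elim => [|n IH] a ha.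
  have -> : a = 0 by apply/rowP => i; rewrite mxE ha.
  rewrite (mx_of_ext (g := fun x => x)) ?mx_of_id; [exact: gen_one | exact: h0].
case: (ltnP n m) => hn; last first.
  apply: IH => i hi; apply: ha; have := ltn_ord i; lia.
pose j : 'I_m := Ordinal hn.
pose v := (a 0 j) *: delta j.
pose u := a - v.
have -> : a = u + v by rewrite subrK.
rewrite (mx_of_ext (hadd u v)).
rewrite (@mx_comp (E (h *: v)) (fun x => E u (E (- (h *: v)) (E v x)))) //.
rewrite (@mx_comp (E u) (fun x => E (- (h *: v)) (E v x))) //.
rewrite (@mx_comp (E (- (h *: v))) (E v)) //.
apply: gen_mul; first by rewrite /v scalerA; apply: hgen.
apply: gen_mul.
  apply: IH => i hi; rewrite /u /v !mxE.
  case: (eqVneq i j) => [->|nij]; first by rewrite mulr1n mulr1 subrr.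
  rewrite mulr0n mulr0 subr0; apply: ha.
  by rewrite ltn_neqAle hi andbT eq_sym; apply: nij.
apply: gen_mul; last exact: hgen.
by rewrite /v scalerA -scaleNr; apply: hgen.
Qed.

Lemma EA_odd a : EO_odd (mx_of (EA a)).
Proof.
apply: gen_ind => //; [exact: repEA | exact: EA_add | exact: EA0 |].
move=> j c; apply: gen_el; exists (j : nat), (- (h * c)); split; first exact: ltn_ord.
left; apply: mxEA_F1.
by rewrite mulrN opprK mulrA [2%:R * h]mulrC hK mul1r.
Qed.

Lemma EB_odd a : EO_odd (mx_of (EB a)).
Proof.
apply: gen_ind => //; [exact: repEB | exact: EB_add | exact: EB0 |].
move=> j c; apply: gen_el; exists (j : nat), (- (h * c)); split; first exact: ltn_ord.
right; apply: mxEB_F2.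
by rewrite mulrN opprK mulrA [2%:R * h]mulrC hK mul1r.
Qed.

Lemma EA_R a : EO_R_gens (mx_of (EA a)).
Proof.
left; exists (fun z => z *: a), (fun g => h * dpair g a); split; last split => //.
  by split => [z z'|c z]; rewrite ?scalerDl ?scalerA.
move=> g z; rewrite /bQ dpairZr.
transitivity ((h * 2%:R) * (dpair g a * z)); first ring.
by rewrite hK mul1r mulrC.
Qed.

Lemma EB_R a : EO_R_gens (mx_of (EB a)).
Proof.
right; exists (fun z => z *: a), (fun y => h * dpair a y); split; last split => //.
  by split => [z z'|c z]; rewrite ?scalerDl ?scalerA.
move=> y z; rewrite /bQ dpairZl.
transitivity ((h * 2%:R) * (dpair a y * z)); first ring.
by rewrite hK mul1r mulrC.
Qed.

Lemma gens_odd (M : 'M[R]_N) : EO_R_gens M -> EO_odd M.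
Proof.
case=> [[al [als [[hD hZ] [hadj ->]]]] | [be [bes [[hD hZ] [hadj ->]]]]].
  pose a := al 1.
  have hal : forall z, al z = z *: a by move=> z; rewrite /a -hZ mulr1.
  have has : forall g, als g = h * dpair g a.
    by move=> g; rewrite /a -hadj /bQ mulr1 mulrA hK mul1r.
  rewrite (mx_of_ext (g := EA a)); first exact: EA_odd.
  by case=> [[z y] g]; rewrite /EA /E_alpha /= !hal !has.
pose a := be 1.
have hal : forall z, be z = z *: a by move=> z; rewrite /a -hZ mulr1.
have has : forall y, bes y = h * dpair a y.
  by move=> y; rewrite /a -hadj /bQ mulr1 mulrA hK mul1r.
rewrite (mx_of_ext (g := EB a)); first exact: EB_odd.
by case=> [[z y] g]; rewrite /EB /E_beta /= !hal !has.
Qed.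

Lemma odd_gens (M : 'M[R]_N) : EO_odd_gens M -> EO_R M.
Proof.
case=> [j [lam [hj [->|->]]]]; apply: gen_el.
  have e := mxEA_F1 (Ordinal hj) (c := - (2%:R * lam)) (lam := lam) erefl.
  by simpl in e; rewrite -e; apply: EA_R.
have e := mxEB_F2 (Ordinal hj) (c := - (2%:R * lam)) (lam := lam) erefl.
by simpl in e; rewrite -e; apply: EB_R.
Qed.

End Proof.

Theorem mainTheorem4 (R : comUnitRingType) (m : nat)
  (h2 : (2%:R : R) \is a GRing.unit) (hm : (1 <= m)%N) :
  forall M : 'M[R]_((2 * m).+1), EO_R M <-> EO_odd M.
Proof.
move=> M; split.
  elim=> [|A HA|A B _ IHA _ IHB|A _ IHA].
  - exact: gen_one.
  - exact: gens_odd.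
  - exact: gen_mul.
  - exact: gen_inv.
elim=> [|A HA|A B _ IHA _ IHB|A _ IHA].
- exact: gen_one.
- exact: odd_gens.
- exact: gen_mul.
- exact: gen_inv.
Qed.
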